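(* For every integer $n\ge 9$, the number of partitions of $n$ into odd parts each at least $5$ equals the number of partitions of $n$ in which the part $1$ occurs at most twice (zero, one, or two times), the parts larger than $1$ are pairwise distinct, there are at least three parts that are $\ge 2$, and the three largest parts are consecutive integers. *)

(* Defs.v *)
From mathcomp Require Import all_boot.
Set Implicit Arguments. Unset Strict Implicit. Unset Printing Implicit Defensive.

(* Finite encoding: a partition of n has at most n parts, each at most n, so it
   corresponds bijectively to a nonincreasing n-tuple with entries in 'I_(n+1)
   and sum n, padded with zeros at the end.  [parts_of t] recovers the partition. *)
Definition parts_of (n : nat) (t : n.-tuple 'I_n.+1) : seq nat :=
  [seq x <- map (@nat_of_ord n.+1) t | 0 < x].

Definition padded_partition (n : nat) (t : n.-tuple 'I_n.+1) : bool :=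
  let s := map (@nat_of_ord n.+1) t in sorted geq s && (sumn s == n).

Definition npart (n : nat) (P : pred (seq nat)) : nat :=
  #|[set t : n.-tuple 'I_n.+1 | padded_partition t && P (parts_of t)]|.

Definition odd_parts_ge5 (s : seq nat) : bool :=
  all (fun x => odd x && (5 <= x)) s.

Definition cond_B (s : seq nat) : bool :=
  let big := [seq x <- s | 1 < x] in
  [&& count_mem 1 s <= 2,
      uniq big,
      3 <= size big,
      nth 0 s 0 == (nth 0 s 1).+1 &
      nth 0 s 1 == (nth 0 s 2).+1].

(* Main.v *)
Require Import Defs.
From mathcomp Require Import all_boot zify.
Set Implicit Arguments. Unset Strict Implicit. Unset Printing Implicit Defensive.

Lemma geq_trans : transitive geq.
Proof. by move=> a b c h1 h2; apply: leq_trans h2 h1. Qed.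
Lemma geq_total : total geq.
Proof. by move=> a b; rewrite /= leq_total. Qed.
Lemma geq_anti : antisymmetric geq.
Proof. by move=> a b /andP[h1 h2]; apply/anti_leq/andP; split. Qed.

Definition ispart n (s : seq nat) := [&& sorted geq s, all (fun x => 0 < x) s & sumn s == n].

Lemma sorted_all x r : sorted geq (x :: r) -> all (fun y => y <= x) r.
Proof. by move=> H; have := order_path_min geq_trans H. Qed.

Lemma sorted_split k s : sorted geq s ->
  s = [seq x <- s | k < x] ++ [seq x <- s | x <= k].
Proof.
elim: s => [//|x r IH] /= Hs.
have Hr : sorted geq r by apply: (path_sorted Hs).
have Hall := sorted_all Hs.
case: ltnP => kx /=.
  by rewrite -IH.
have Hk : all (fun y => y <= k) r.
  by apply/allP => y /(allP Hall) yx; apply: leq_trans yx kx.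
have -> : [seq x0 <- r | k < x0] = [::].
  elim: r Hk {IH Hr Hall Hs} => [//|y r IH] /= /andP[yk Hk].
  by rewrite ltnNge yk /= IH.
by rewrite (all_filterP Hk).
Qed.

Lemma filter_le0 (s : seq nat) : [seq x <- s | x <= 0] = nseq (size [seq x <- s | x <= 0]) 0.
Proof. by elim: s => [//|x r IH] /=; case: x => [|x] //=; rewrite -IH. Qed.

Lemma filter_le1 (s : seq nat) : all (fun x => 0 < x) s ->
  [seq x <- s | x <= 1] = nseq (count_mem 1 s) 1.
Proof. by elim: s => [//|x r IH] /= /andP[]; case: x => [|[|x]] //= _ /IH ->. Qed.

Lemma size_le_sumn s : all (fun x => 0 < x) s -> size s <= sumn s.
Proof. by elim: s => [//|x r IH] /= /andP[x0 /IH]; lia. Qed.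

Lemma mem_le_sumn s x : x \in s -> x <= sumn s.
Proof.
elim: s => [//|y r IH]; rewrite inE /= => /orP[/eqP->|/IH]; lia.
Qed.

Lemma sumn_filter_pos s : sumn [seq x <- s | 0 < x] = sumn s.
Proof. by elim: s => [//|[|x] r IH] //=; rewrite IH. Qed.

Lemma parts_ok n (t : n.-tuple 'I_n.+1) : padded_partition t -> ispart n (parts_of t).
Proof.
rewrite /padded_partition /parts_of /ispart => /andP[Hs /eqP Hn].
rewrite sumn_filter_pos Hn eqxx filter_all andbT.
rewrite andbT; exact: (sorted_filter geq_trans).
Qed.

Lemma val_parts n (t : n.-tuple 'I_n.+1) : padded_partition t ->
  map val t = parts_of t ++ nseq (n - size (parts_of t)) 0.
Proof.
rewrite /padded_partition /parts_of => /andP[Hs _].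
rewrite {1}(sorted_split 0 Hs); congr (_ ++ _).
rewrite filter_le0; congr nseq.
have E := congr1 size (sorted_split 0 Hs).
rewrite size_cat size_map size_tuple in E; lia.
Qed.

Lemma parts_inj n (t1 t2 : n.-tuple 'I_n.+1) : padded_partition t1 -> padded_partition t2 ->
  parts_of t1 = parts_of t2 -> t1 = t2.
Proof.
move=> h1 h2 e; apply: val_inj; apply: (inj_map val_inj).
by rewrite /= (val_parts h1) (val_parts h2) e.
Qed.

Definition enc n (s : seq nat) : n.-tuple 'I_n.+1 :=
  insubd (nseq_tuple n ord0) (map inord (s ++ nseq (n - size s) 0)).

Lemma enc_val n s : ispart n s -> map val (enc n s) = s ++ nseq (n - size s) 0.
Proof.
rewrite /ispart => /and3P[Hs Hp /eqP Hn].
have Hsz : size s <= n by rewrite -Hn size_le_sumn.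
rewrite /enc val_insubd size_map size_cat size_nseq.
have -> : size s + (n - size s) == n by apply/eqP; lia.
rewrite -map_comp; apply: map_id_in => x /=; rewrite mem_cat => /orP[xs|].
  by rewrite inordK // ltnS -Hn mem_le_sumn.
by rewrite mem_nseq => /andP[_ /eqP->]; rewrite inordK.
Qed.

Lemma path_nseq y k v : v <= y -> path geq y (nseq k v).
Proof. by elim: k y => [|k IH] y //= vy; rewrite vy /= IH. Qed.

Lemma sorted_padv s k v : sorted geq s -> all (fun x => v <= x) s ->
  sorted geq (s ++ nseq k v).
Proof.
case: s => [|x r] /=.
  by move=> _ _; case: k => [|k] //=; apply: path_nseq.
move=> H /andP[vx Hv]; rewrite cat_path H /=; apply: path_nseq.
by elim: r x vx Hv {H} => [|y r IH] x //= vx /andP[vy Hv]; apply: IH.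
Qed.

Lemma sorted_pad s k : sorted geq s -> sorted geq (s ++ nseq k 0).
Proof. by move=> H; apply: sorted_padv => //; apply/allP. Qed.

Lemma enc_ok n s : ispart n s -> padded_partition (enc n s) && (parts_of (enc n s) == s).
Proof.
move=> Hp; rewrite /padded_partition /parts_of enc_val //.
move: Hp; rewrite /ispart => /and3P[Hs Hpos /eqP Hn].
rewrite sorted_pad // sumn_cat sumn_nseq Hn mul0n addn0 eqxx /=.
by rewrite filter_cat (all_filterP Hpos) filter_nseq /= cats0.
Qed.

Lemma npart_le n m (P Q : pred (seq nat)) (f g : seq nat -> seq nat) :
  (forall s, ispart n s -> P s -> [&& ispart m (f s), Q (f s) & g (f s) == s]) ->
  npart n P <= npart m Q.
Proof.
move=> H; rewrite /npart.
set A := [set t | _]; set B := [set t | _].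
pose F (t : n.-tuple 'I_n.+1) := enc m (f (parts_of t)).
have HA t : t \in A -> padded_partition t /\ P (parts_of t).
  by rewrite inE => /andP[].
rewrite -(@card_in_imset _ _ F A).
  apply: subset_leq_card; apply/subsetP => _ /imsetP[t /HA[pt Pt] ->].
  have /and3P[h1 h2 _] := H _ (parts_ok pt) Pt.
  have /andP[e1 /eqP e2] := enc_ok h1.
  by rewrite inE e1 /F e2 h2.
move=> t1 t2 /HA[p1 P1] /HA[p2 P2] e.
have /and3P[h1 _ /eqP g1] := H _ (parts_ok p1) P1.
have /and3P[h2 _ /eqP g2] := H _ (parts_ok p2) P2.
have /andP[_ /eqP e1] := enc_ok h1.
have /andP[_ /eqP e2] := enc_ok h2.
apply: parts_inj => //.
by rewrite -g1 -g2 -e1 -e2 /F in e *; rewrite e.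
Qed.

Lemma npart_bij n m (P Q : pred (seq nat)) (f g : seq nat -> seq nat) :
  (forall s, ispart n s -> P s -> [&& ispart m (f s), Q (f s) & g (f s) == s]) ->
  (forall s, ispart m s -> Q s -> [&& ispart n (g s), P (g s) & f (g s) == s]) ->
  npart n P = npart m Q.
Proof.
by move=> H1 H2; apply/eqP; rewrite eqn_leq (npart_le H1) (npart_le H2).
Qed.

Lemma npart_eq n (P Q : pred (seq nat)) : (forall s, ispart n s -> P s = Q s) -> npart n P = npart n Q.
Proof.
by move=> H; apply: (@npart_bij _ _ _ _ id id) => s Hs; rewrite /= Hs eqxx H // andbT.
Qed.

Lemma npart_split n (P R1 R2 : pred (seq nat)) :
  (forall s, ispart n s -> P s = R1 s || R2 s) ->
  (forall s, ispart n s -> ~~ (R1 s && R2 s)) ->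
  npart n P = npart n R1 + npart n R2.
Proof.
move=> HP HD; rewrite /npart.
rewrite -(cardsID [set t : n.-tuple 'I_n.+1 | padded_partition t && R1 (parts_of t)]
                  [set t : n.-tuple 'I_n.+1 | padded_partition t && P (parts_of t)]).
congr (_ + _); apply: eq_card => t; rewrite !inE;
  case pt: (padded_partition t) => //=; have ps := parts_ok pt;
  rewrite (HP _ ps); have := HD _ ps; by case: (R1 _); case: (R2 _).
Qed.

Lemma add_part n c (P Q : pred (seq nat)) : 0 < c ->
  (forall s1 s2, perm_eq s1 s2 -> Q s1 = Q s2) ->
  (forall s, all (fun x => 0 < x) s -> P s = Q (c :: s)) ->
  npart (n + c) (fun s => Q s && (c \in s)) = npart n P.
Proof.
move=> c0 HQ HP; apply: (@npart_bij _ _ _ _ (rem c) (fun s => sort geq (c :: s))).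
  move=> s /and3P[Hs Hpos /eqP Hn] /andP[Qs cs].
  have Hp := perm_to_rem cs.
  have Hpos' : all (fun x => 0 < x) (c :: rem c s) by rewrite -(perm_all _ Hp).
  rewrite /ispart (subseq_sorted geq_trans (rem_subseq c s) Hs).
  move: (Hpos') => /= /andP[_ ->] /=.
  rewrite (perm_sumn Hp) /= in Hn.
  have -> : sumn (rem c s) == n by apply/eqP; lia.
  have Pr : P (rem c s).
    by rewrite HP; [rewrite -(HQ _ _ Hp) | move: Hpos' => /andP[]].
  rewrite Pr /=.
  apply/eqP/(sorted_eq geq_trans geq_anti) => //; first by apply: sort_sorted; exact: geq_total.
  by rewrite perm_sort perm_sym.
move=> s /and3P[Hs Hpos /eqP Hn] Ps.
have Hp : perm_eq (sort geq (c :: s)) (c :: s) by rewrite perm_sort.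
have cin : c \in sort geq (c :: s) by rewrite (perm_mem Hp) mem_head.
rewrite /ispart sort_sorted; last exact: geq_total.
rewrite (perm_all _ Hp) /= c0 Hpos (perm_sumn Hp) /= Hn addnC eqxx /=.
rewrite (HQ _ _ Hp) -HP // Ps cin /=.
apply/eqP/(sorted_eq geq_trans geq_anti) => //.
  exact: (subseq_sorted geq_trans (rem_subseq _ _) (sort_sorted geq_total _)).
have := perm_to_rem cin; rewrite perm_sym => Hp2.
by rewrite -(perm_cons c); apply: perm_trans Hp2 Hp.
Qed.

Definition allodd (s : seq nat) := all odd s.
Definition odd3 (s : seq nat) := all (fun x => odd x && (2 < x)) s.
Definition D2 (s : seq nat) := uniq s && all (fun x => 1 < x) s.

Lemma odd3E s : all (fun x => 0 < x) s -> odd3 s = allodd s && (1 \notin s).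
Proof.
rewrite /odd3 /allodd; elim: s => [//|x r IH] /= /andP[x0 /IH ->].
rewrite inE negb_or; case: x x0 => [|[|[|x]]] //= _.
  by rewrite !andbF.
rewrite (_ : 2 < x.+3 = true) //.
by case: (odd x); case: (all odd r); case: (1 \in r).
Qed.

Lemma ge5E s : all (fun x => 0 < x) s -> odd_parts_ge5 s = odd3 s && (3 \notin s).
Proof.
rewrite /odd3 /odd_parts_ge5; elim: s => [//|x r IH] /= /andP[x0 /IH ->].
rewrite inE negb_or; case: x x0 => [|[|[|[|[|x]]]]] //= _.
  by rewrite !andbF.
rewrite (_ : 2 < x.+1.+4 = true) // (_ : 4 < x.+1.+4 = true) //.
by case: (odd x); case: (all _ r); case: (3 \in r).
Qed.

Lemma D2E s : all (fun x => 0 < x) s -> D2 s = uniq s && (1 \notin s).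
Proof.
rewrite /D2 => H; congr (_ && _).
elim: s H => [//|x r IH] /= /andP[x0 /IH ->].
by rewrite inE negb_or; case: x x0 => [|[|x]].
Qed.

Lemma R1 k : npart k.+1 allodd = npart k allodd + npart k.+1 odd3.
Proof.
rewrite -(@add_part k 1 allodd allodd) // ?addn1.
- apply: npart_split => s /and3P[_ Hp _].
    by rewrite odd3E //; case: (allodd s); case: (1 \in s).
  by rewrite odd3E //; case: (allodd s); case: (1 \in s).
- by move=> s1 s2 H; rewrite /allodd (perm_all _ H).
Qed.

Lemma R2 k : npart k.+3 odd3 = npart k odd3 + npart k.+3 odd_parts_ge5.
Proof.
rewrite -(@add_part k 3 odd3 odd3) // ?addn3.
- apply: npart_split => s /and3P[_ Hp _].
    by rewrite ge5E //; case: (odd3 s); case: (3 \in s).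
  by rewrite ge5E //; case: (odd3 s); case: (3 \in s).
- by move=> s1 s2 H; rewrite /odd3 (perm_all _ H).
Qed.

Lemma R4 k : npart k.+1 (fun s => uniq s) = npart k.+1 D2 + npart k D2.
Proof.
rewrite -(@add_part k 1 D2 (fun s => uniq s)) // ?addn1.
- rewrite addnC; apply: npart_split => s /and3P[_ Hp _].
    by rewrite D2E //; case: (uniq s); case: (1 \in s).
  by rewrite D2E //; case: (uniq s); case: (1 \in s).
- by move=> s1 s2 H; rewrite (perm_uniq H).
- by move=> s H; rewrite D2E // andbC.
Qed.

Definition top2 (s : seq nat) := if s is a :: b :: _ then a == b.+1 else false.
Definition E2 s := D2 s && top2 s.
Definition top3 (s : seq nat) := if s is _ :: b :: c :: _ then b == c.+1 else false.
Definition C3 s := E2 s && top3 s.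

Lemma strict x r : sorted geq (x :: r) -> uniq (x :: r) -> all (fun y => y < x) r.
Proof.
move=> Hs /andP[xr _]; have Ha := sorted_all Hs.
apply/allP => y yr; have := allP Ha y yr; rewrite leq_eqVlt => /orP[/eqP e|//].
by rewrite -e yr in xr.
Qed.

Lemma notin_lt a b r : all (fun y => y < b) r -> b <= a -> a \notin r.
Proof. by move=> H ba; apply/negP => /(allP H); rewrite ltnNge ba. Qed.

Lemma path_lt x r : all (fun y => y <= x) r -> sorted geq r -> path geq x r.
Proof. by move=> H Hs; rewrite path_min_sorted. Qed.

Lemma all_lt_le x y r : all (fun z => z < x) r -> x <= y -> all (fun z => z <= y) r.
Proof. by move=> H xy; apply/allP => z /(allP H) zx; apply: leq_trans (ltnW zx) xy. Qed.

Lemma all_lt_lt x y r : all (fun z => z < x) r -> x <= y -> all (fun z => z < y) r.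
Proof. by move=> H xy; apply/allP => z /(allP H) zx; apply: leq_trans zx xy. Qed.

Definition bump1 (s : seq nat) := if s is x :: r then x.+1 :: r else s.
Definition unbump1 (s : seq nat) := if s is x :: r then x.-1 :: r else s.

Lemma R5 k : npart k.+3 D2 = npart k.+2 D2 + npart k.+3 E2.
Proof.
have -> : npart k.+3 D2 = npart k.+3 (fun s => D2 s && ~~ top2 s) + npart k.+3 E2.
  by apply: npart_split => s _; rewrite /E2; case: (D2 s); case: (top2 s).
congr (_ + _); symmetry; apply: (@npart_bij _ _ _ _ bump1 unbump1).
  case=> [|x r] /and3P[Hs Hp /eqP Hn] //.
  rewrite /D2 => /andP[Hu Hg].
  have Hlt := strict Hs Hu.
  have Hr : sorted geq r := path_sorted Hs.
  move: Hu Hg Hp Hn => /= /andP[xr ur] /andP[x1 g1] /andP[x0 p1] Hn.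
  rewrite /ispart /D2 /= path_lt ?(all_lt_le Hlt) // p1 ur g1 addSn Hn eqxx.
  rewrite (notin_lt Hlt) // eqxx !andbT /=.
  rewrite (ltn_trans x1 (ltnSn x)) /=.
  by case: r Hlt {Hr xr ur g1 p1 Hs Hn} => [|y r] // /= /andP[yx _]; rewrite eqSS; apply/eqP; lia.
case=> [|x r] /and3P[Hs Hp /eqP Hn] //.
rewrite /D2 => /andP[/andP[Hu Hg] Ht].
have Hlt := strict Hs Hu.
have Hr : sorted geq r := path_sorted Hs.
move: Hu Hg Hp Hn => /= /andP[xr ur] /andP[x1 g1] /andP[x0 p1] Hn.
have Hlt2 : all (fun y => y < x.-1) r.
  case: r Hlt Ht Hr g1 {xr ur p1 Hn Hs} => [|y r] //= /andP[yx Hlt] Ht Hr /andP[y1 g1].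
  have yy : all (fun z => z <= y) r by apply: sorted_all.
  apply/andP; split; first lia.
  apply/allP => z /(allP yy) zy; lia.
have x2 : 1 < x.-1.
  case: r Hlt Ht Hn g1 {xr ur p1 Hs Hr Hlt2} => [|y r] /=; first by move=> _ _ Hn _; lia.
  by move=> /andP[yx _] Ht _ /andP[y1 _]; lia.
rewrite /ispart /D2 /= path_lt ?(all_lt_le Hlt2) // p1 ur g1 /= (notin_lt Hlt2) //.
rewrite (ltn_trans _ x2) //= andbT; apply/andP; split; first by apply/eqP; lia.
by rewrite x2 (prednK x0) eqxx.
Qed.

Ltac bsplit := repeat match goal with |- is_true (_ && _) => apply/andP; split end.

Definition bump2 (s : seq nat) := if s is a :: b :: r then a.+1 :: b.+1 :: r else s.
Definition unbump2 (s : seq nat) := if s is a :: b :: r then a.-1 :: b.-1 :: r else s.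

Lemma R6 k : npart k.+2.+4 E2 = npart k.+4 E2 + npart k.+2.+4 C3.
Proof.
have -> : npart k.+2.+4 E2 = npart k.+2.+4 (fun s => E2 s && ~~ top3 s) + npart k.+2.+4 C3.
  by apply: npart_split => s _; rewrite /C3; case: (E2 s); case: (top3 s).
congr (_ + _); symmetry; apply: (@npart_bij _ _ _ _ bump2 unbump2).
  case=> [|a [|b r]] /and3P[Hs Hp /eqP Hn]; rewrite /E2 /D2 /= ?andbF //.
  move=> /andP[/andP[Hu Hg] /eqP ab].
  have Hlt := strict Hs Hu.
  have Hs' : sorted geq (b :: r) := path_sorted Hs.
  move: (Hu) => /andP[_ Hu'].
  have Hlt' := strict Hs' Hu'.
  have Hr : sorted geq r := path_sorted Hs'.
  move: Hu Hg Hp Hn => /= /and3P[_ br ur] /and3P[a1 b1 g1] /and3P[a0 b0 p1] Hn.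
  subst a.
  have Hm : ~~ match r with [::] => false | c :: _ => b.+1 == c.+1 end.
    case: r Hlt' {Hr br ur g1 p1 Hs Hs' Hlt Hn Hu'} => [|y r] // /= /andP[yb _].
    by rewrite eqSS (gtn_eqF yb).
  have N1 : b.+2 \notin b.+1 :: r.
    by rewrite inE negb_or (notin_lt Hlt' (leqW (leqnSn b))) andbT (gtn_eqF (ltnSn _)).
  have N2 : b.+1 \notin r := notin_lt Hlt' (leqnSn b).
  have Pa : path geq b.+1 r by apply: path_lt => //; apply: all_lt_le Hlt' (leqnSn b).
  rewrite /ispart /D2 /=; bsplit; try done.
  by clear -Hn; lia.
case=> [|a [|b r]] /and3P[Hs Hp /eqP Hn]; rewrite /E2 /D2 /= ?andbF //.
move=> /andP[/andP[/andP[Hu Hg] /eqP ab] Ht].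
have Hlt := strict Hs Hu.
have Hs' : sorted geq (b :: r) := path_sorted Hs.
move: (Hu) => /andP[_ Hu'].
have Hlt' := strict Hs' Hu'.
have Hr : sorted geq r := path_sorted Hs'.
move: Hu Hg Hp Hn => /= /and3P[_ br ur] /and3P[a1 b1 g1] /and3P[a0 b0 p1] Hn.
subst a.
have Hlt2 : all (fun y => y < b.-1) r.
  case: r Hlt' Ht Hr g1 {br ur p1 Hn Hs Hs' Hlt Hu'} => [|y r] //= /andP[yx Hlt] Ht Hr /andP[y1 g1].
  have yy : all (fun z => z <= y) r by apply: sorted_all.
  apply/andP; split; first by clear -yx Ht y1; lia.
  apply/allP => z /(allP yy) zy; clear -yx Ht y1 zy; lia.
have b2 : 1 < b.-1.
  case: r Hlt' Ht Hn g1 {br ur p1 Hs Hs' Hr Hlt2 Hlt Hu'} => [|y r] /=; first by move=> _ _ Hn _; clear -Hn b1; lia.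
  by move=> /andP[yx _] Ht _ /andP[y1 _]; clear -yx Ht y1; lia.
have N1 : b.-1 \notin r by rewrite (notin_lt Hlt2).
have N2 : b \notin b.-1 :: r.
  rewrite inE negb_or (notin_lt Hlt' (leqnn b)) andbT.
  by move: b0; clear; lia.
have Pa : path geq b.-1 r by apply: path_lt => //; apply: all_lt_le Hlt2 (leqnn _).
rewrite /ispart /D2 /= (prednK b0); bsplit; try done.
all: clear -b1 b2 Hn; lia.
Qed.

Definition Bj (j : nat) (s : seq nat) := cond_B s && (count_mem 1 s == j).

Lemma Bsplit n : npart n cond_B = npart n (Bj 0) + npart n (Bj 1) + npart n (Bj 2).
Proof.
have -> : npart n cond_B = npart n (fun s => cond_B s && (count_mem 1 s < 2)) + npart n (Bj 2).
  apply: npart_split => s _; rewrite /Bj; case H: (cond_B s) => //=.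
    have : count_mem 1 s <= 2 by move: H; rewrite /cond_B => /and5P[].
    by case: (count_mem 1 s) => [|[|[|c]]].
  by case: (count_mem 1 s) => [|[|[|c]]].
congr (_ + _); apply: npart_split => s _; rewrite /Bj;
  by case: (cond_B s); case: (count_mem 1 s) => [|[|[|c]]].
Qed.

Lemma filter_gt1 s j : all (fun x => 1 < x) s -> [seq x <- s ++ nseq j 1 | 1 < x] = s.
Proof. by move=> H; rewrite filter_cat (all_filterP H) filter_nseq /= cats0. Qed.

Lemma Bj_C j k : j <= 2 -> npart (k + j) (Bj j) = npart k C3.
Proof.
move=> hj; apply: (@npart_bij _ _ _ _ (fun s => [seq x <- s | 1 < x]) (fun s => s ++ nseq j 1)).
  move=> s /and3P[Hs Hp /eqP Hn] /andP[HB /eqP Hc].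
  have Es : s = [seq x <- s | 1 < x] ++ nseq j 1 by rewrite {1}(sorted_split 1 Hs) filter_le1 // Hc.
  have Hbig : all (fun x => 1 < x) [seq x <- s | 1 < x] by apply: filter_all.
  have Hsb : sorted geq [seq x <- s | 1 < x] by apply: sorted_filter => //; apply: geq_trans.
  move: HB Hn; rewrite {1 2}Es /cond_B filter_gt1 // => /and5P[_ Hu Hsz H0 H1].
  rewrite sumn_cat sumn_nseq mul1n => Hn.
  have Hpb : all (fun x => 0 < x) [seq x <- s | 1 < x].
    by apply/allP => x /(allP Hbig) /ltnW.
  rewrite /ispart Hsb Hpb /= -Es eqxx andbT.
  apply/andP; split; first by apply/eqP; lia.
  move: Hu Hsz H0 H1 Hbig; case: [seq x <- s | 1 < x] => [|a [|b [|c r]]] //= Hu _ H0 H1 Hbig.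
  by rewrite /C3 /E2 /D2 /= Hu Hbig H0 H1.
move=> s /and3P[Hs Hp /eqP Hn] HC.
have Hg : all (fun x => 1 < x) s by move: HC; rewrite /C3 /E2 /D2 => /andP[/andP[/andP[]]].
have Hc0 : count_mem 1 s = 0.
  by apply/count_memPn/negP => /(allP Hg).
have Hsp : sorted geq (s ++ nseq j 1) by apply: sorted_padv => //; apply/allP => x /(allP Hp).
rewrite /ispart Hsp all_cat Hp /=.
have -> : all (fun x => 0 < x) (nseq j 1) by apply/allP => x; rewrite mem_nseq => /andP[_ /eqP->].
rewrite sumn_cat sumn_nseq Hn mul1n eqxx /Bj count_cat Hc0 count_nseq /= mul1n eqxx.
rewrite /cond_B filter_gt1 // count_cat Hc0 count_nseq /= mul1n hj eqxx !andbT.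
move: HC; rewrite /C3 /E2 /D2; move: (s) Hc0 => [|a [|b [|c r]]] //= Hc0; rewrite ?andbF //.
by move=> /andP[/andP[/andP[Hu _] /eqP Ea] /eqP Eb]; subst a b; rewrite Hu !eqxx.
Qed.

Definition mpred (A : nat -> nat -> bool) (s : seq nat) := all (fun j => A j (count_mem j s)) s.

Lemma mem_cnt j (s : seq nat) : (j \in s) = (0 < count_mem j s).
Proof. by rewrite -has_pred1 has_count. Qed.

Lemma mpred_cnt (A : nat -> nat -> bool) s : mpred A s -> forall j, 0 < count_mem j s -> A j (count_mem j s).
Proof. by move=> H j; rewrite -mem_cnt => /(allP H). Qed.

Lemma mpred_of (A : nat -> nat -> bool) s : (forall j, 0 < count_mem j s -> A j (count_mem j s)) -> mpred A s.
Proof. by move=> H; apply/allP => j; rewrite mem_cnt => /H. Qed.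

Lemma count_sort j (t : seq nat) : count_mem j (sort geq t) = count_mem j t.
Proof. by have /permP H : perm_eq (sort geq t) t by rewrite perm_sort. Qed.

Lemma perm_cnt (s1 s2 : seq nat) : (forall j, count_mem j s1 = count_mem j s2) -> perm_eq s1 s2.
Proof. by move=> H; apply/allP => j _; rewrite /= H. Qed.

Definition rest (x : nat) (t : seq nat) := [seq z <- t | (z != x) && (z != x.*2)].
Definition Bld (x a b : nat) (t : seq nat) := nseq a x ++ nseq b x.*2 ++ rest x t.

Lemma x_neq_2x x : 0 < x -> (x == x.*2) = false.
Proof. by move=> x0; apply/eqP; lia. Qed.

Lemma cnt_rest x j t : count_mem j (rest x t) = ((j != x) && (j != x.*2)) * count_mem j t.
Proof.
rewrite /rest count_filter; case: (boolP ((j != x) && (j != x.*2))) => H.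
  by rewrite mul1n; apply: eq_count => z /=; case: (eqVneq z j) => [->|] /=; rewrite ?eqxx ?H.
rewrite mul0n; apply/eqP; rewrite -leqn0 leqNgt -has_count; apply/hasPn => z _ /=.
by case: (eqVneq z j) => [->|] //=; rewrite (negbTE H).
Qed.

Lemma cnt_x x a b t : 0 < x -> count_mem x (Bld x a b t) = a.
Proof.
move=> x0; rewrite /Bld !count_cat !count_nseq cnt_rest /= eqxx eq_sym x_neq_2x //.
by rewrite mul1n mul0n /= addn0.
Qed.

Lemma cnt_y x a b t : 0 < x -> count_mem x.*2 (Bld x a b t) = b.
Proof.
move=> x0; rewrite /Bld !count_cat !count_nseq cnt_rest /= eqxx x_neq_2x //.
by rewrite mul1n mul0n /= andbF mul0n addn0.
Qed.

Lemma cnt_o x j a b t : j != x -> j != x.*2 -> count_mem j (Bld x a b t) = count_mem j t.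
Proof.
move=> h1 h2; rewrite /Bld !count_cat !count_nseq cnt_rest /= h1 h2 /=.
by rewrite eq_sym (negbTE h1) eq_sym (negbTE h2) !mul0n mul1n.
Qed.

Lemma sumn_Bld x a b t : sumn (Bld x a b t) = a * x + b * x.*2 + sumn (rest x t).
Proof. by rewrite /Bld !sumn_cat !sumn_nseq addnA mulnC (mulnC _ b). Qed.

Lemma perm_Bld x t : 0 < x -> perm_eq t (Bld x (count_mem x t) (count_mem x.*2 t) t).
Proof.
move=> x0; apply: perm_cnt => j.
case: (eqVneq j x) => [->|h1]; first by rewrite cnt_x.
case: (eqVneq j x.*2) => [->|h2]; first by rewrite cnt_y.
by rewrite cnt_o.
Qed.

Lemma all_Bld x a b t : 0 < x -> all (fun z => 0 < z) t -> all (fun z => 0 < z) (Bld x a b t).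
Proof.
move=> x0 Ht; rewrite /Bld !all_cat; apply/and3P; split.
- by apply/allP => z; rewrite mem_nseq => /andP[_ /eqP->].
- by apply/allP => z; rewrite mem_nseq => /andP[_ /eqP->]; rewrite double_gt0.
- by apply/allP => z; rewrite mem_filter => /andP[_ /(allP Ht)].
Qed.

Lemma merge n x (A A' : nat -> nat -> bool) : 0 < x ->
  (forall c, A x c) -> (forall c, A x.*2 c = (c == 0)) ->
  (forall c, A' x c = (c <= 1)) -> (forall c, A' x.*2 c) ->
  (forall j c, j != x -> j != x.*2 -> A' j c = A j c) ->
  npart n (mpred A) = npart n (mpred A').
Proof.
move=> x0 Ax Ay A'x A'y Ao.
pose f s := sort geq (Bld x (count_mem x s %% 2) (count_mem x s %/ 2) s).
pose g s := sort geq (Bld x (count_mem x s + (count_mem x.*2 s).*2) 0 s).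
have Hsort t : sorted geq (sort geq t) by apply: sort_sorted; exact: geq_total.
apply: (@npart_bij _ _ _ _ f g).
- move=> s /and3P[Hs Hp /eqP Hn] HA.
  have cy : count_mem x.*2 s = 0.
    case: (posnP (count_mem x.*2 s)) => // h.
    by have := mpred_cnt HA h; rewrite Ay => /eqP; lia.
  have Hpf : perm_eq (f s) (Bld x (count_mem x s %% 2) (count_mem x s %/ 2) s) by rewrite perm_sort.
  have Hperm := perm_Bld s x0.
  have Hsum := perm_sumn Hperm; rewrite sumn_Bld cy in Hsum.
  have cfx : count_mem x (f s) = count_mem x s %% 2 by rewrite count_sort cnt_x.
  have cfy : count_mem x.*2 (f s) = count_mem x s %/ 2 by rewrite count_sort cnt_y.
  have cfo j : j != x -> j != x.*2 -> count_mem j (f s) = count_mem j s.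
    by move=> h1 h2; rewrite count_sort cnt_o.
  apply/and3P; split.
  + rewrite /ispart Hsort (perm_all _ Hpf) all_Bld //= (perm_sumn Hpf) sumn_Bld.
    apply/eqP; rewrite -Hn Hsum; clear; rewrite {3}(divn_eq (count_mem x s) 2) -muln2; nia.
  + apply: mpred_of => j.
    case: (eqVneq j x) => [->|h1]; first by rewrite A'x cfx; lia.
    case: (eqVneq j x.*2) => [->|h2]; first by rewrite A'y.
    by rewrite Ao // cfo //; apply: mpred_cnt.
  + apply/eqP/(sorted_eq geq_trans geq_anti (Hsort _) Hs); apply: perm_cnt => j.
    rewrite count_sort.
    case: (eqVneq j x) => [->|h1]; first by rewrite cnt_x // cfx cfy; lia.
    case: (eqVneq j x.*2) => [->|h2]; first by rewrite cnt_y.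
    by rewrite cnt_o // cfo.
- move=> s /and3P[Hs Hp /eqP Hn] HA.
  have cx : count_mem x s <= 1.
    case: (posnP (count_mem x s)) => [->//|h].
    by have := mpred_cnt HA h; rewrite A'x.
  have Hpf : perm_eq (g s) (Bld x (count_mem x s + (count_mem x.*2 s).*2) 0 s) by rewrite perm_sort.
  have Hperm := perm_Bld s x0.
  have Hsum := perm_sumn Hperm; rewrite sumn_Bld in Hsum.
  have cgx : count_mem x (g s) = count_mem x s + (count_mem x.*2 s).*2 by rewrite count_sort cnt_x.
  have cgy : count_mem x.*2 (g s) = 0 by rewrite count_sort cnt_y.
  have cgo j : j != x -> j != x.*2 -> count_mem j (g s) = count_mem j s.
    by move=> h1 h2; rewrite count_sort cnt_o.
  apply/and3P; split.
  + rewrite /ispart Hsort (perm_all _ Hpf) all_Bld //= (perm_sumn Hpf) sumn_Bld.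
    apply/eqP; rewrite -Hn Hsum; clear; rewrite -!muln2; nia.
  + apply: mpred_of => j.
    case: (eqVneq j x) => [->|h1]; first by rewrite Ax.
    case: (eqVneq j x.*2) => [->|h2]; first by rewrite cgy.
    by rewrite -Ao // cgo //; apply: mpred_cnt.
  + apply/eqP/(sorted_eq geq_trans geq_anti (Hsort _) Hs); apply: perm_cnt => j.
    rewrite count_sort.
    case: (eqVneq j x) => [->|h1]; first by rewrite cnt_x // cgx; lia.
    case: (eqVneq j x.*2) => [->|h2]; first by rewrite cnt_y // cgx; lia.
    by rewrite cnt_o // cgo.
Qed.

Definition Am (m j c : nat) : bool :=
  if j <= m then c <= 1 else if odd j || (j./2 <= m) then true else c == 0.

Lemma step n m : npart n (mpred (Am m)) = npart n (mpred (Am m.+1)).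
Proof.
apply: (@merge n m.+1) => //.
- move=> c; rewrite /Am ltnn; case: m => [|m] //=.
  have := odd_double_half m; case: (odd m) => /= // e.
  by rewrite (_ : m./2 < m.+1) //; lia.
- move=> c; rewrite /Am odd_double doubleK ltnn /=.
  by have -> : (m.+1.*2 <= m) = false by apply/negbTE; rewrite -ltnNge; lia.
- by move=> c; rewrite /Am leqnn.
- move=> c; rewrite /Am odd_double doubleK leqnn /=.
  by have -> : (m.+1.*2 <= m.+1) = false by apply/negbTE; rewrite -ltnNge; lia.
- move=> j c h1 h2; rewrite /Am.
  case: (ltngtP j m.+1) => [hj|hj|hj]; last by rewrite hj eqxx in h1.
    have hj' : j <= m by lia.
    by rewrite hj'.
  have hj' : (j <= m) = false by apply/negbTE; rewrite -ltnNge; lia.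
  rewrite hj'; have := odd_double_half j; case: (odd j) => //= e.
  have hne : j./2 != m.+1 by apply/eqP => E; move: h2; rewrite -e E add0n eqxx.
  by rewrite leq_eqVlt ltnS (negbTE hne).
Qed.

Lemma uniq_cnt (s : seq nat) : uniq s = all (fun j => count_mem j s <= 1) s.
Proof.
apply/idP/idP => [Hu|H].
  by apply/allP => j js; rewrite count_uniq_mem // js.
apply: count_mem_uniq => j; case: (boolP (j \in s)) => js.
  have := allP H j js; have := js; rewrite mem_cnt; lia.
by apply/count_memPn.
Qed.

Lemma euler n : npart n allodd = npart n (fun s => uniq s).
Proof.
have -> : npart n allodd = npart n (mpred (Am 0)).
  apply: npart_eq => s /and3P[_ Hp _]; rewrite /allodd /mpred; apply: eq_in_all => j js.
  have j0 := allP Hp j js; have := js; rewrite mem_cnt => c0.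
  rewrite /Am leqNgt j0 /=; have := odd_double_half j; case: (odd j) => //= e.
  rewrite leqn0 (_ : j./2 == 0 = false); last by apply/negbTE; apply/eqP => E; move: e j0; rewrite E; lia.
  by apply/esym/negbTE; rewrite -lt0n.
have -> : npart n (fun s => uniq s) = npart n (mpred (Am n)).
  apply: npart_eq => s /and3P[_ _ /eqP Hn]; rewrite uniq_cnt /mpred; apply: eq_in_all => j js.
  by rewrite /Am (_ : j <= n) // -Hn mem_le_sumn.
have H m : npart n (mpred (Am 0)) = npart n (mpred (Am m)).
  by elim: m => [//|m IH]; rewrite IH step.
exact: H n.
Qed.

Unset Implicit Arguments.


Theorem proposition2p1 (n : nat) : 9 <= n ->
  npart n odd_parts_ge5 = npart n cond_B.
Proof.
move=> hn; have [m ->] : exists m, n = m + 9 by exists (n - 9); lia.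
rewrite !addnS addn0.
have r1a := R1 m.+4.+4. have r1b := R1 m.+4.+1.
have r2 := R2 m.+4.+2.
have e9 := euler m.+4.+4.+1. have e8 := euler m.+4.+4. have e6 := euler m.+4.+2. have e5 := euler m.+4.+1.
have u9 := R4 m.+4.+4. have u8 := R4 m.+4.+3. have u6 := R4 m.+4.+1. have u5 := R4 m.+4.
have d9 := R5 m.+4.+2. have d8 := R5 m.+4.+1. have d6 := R5 m.+3. have d5 := R5 m.+2.
have c9 := R6 m.+3. have c8 := R6 m.+2. have c7 := R6 m.+1.
have bs := Bsplit m.+4.+4.+1.
have b0 := @Bj_C 0 m.+4.+4.+1 (isT : 0 <= 2). rewrite addn0 in b0.
have b1 := @Bj_C 1 m.+4.+4 (isT : 1 <= 2). rewrite addn1 in b1.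
have b2 := @Bj_C 2 m.+4.+3 (isT : 2 <= 2). rewrite addn2 in b2.
lia.
Qed.
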